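(* Let $K\subset\mathbb C$ be a number field, let $\pi\in K$ be a non-square, let $L=K(\sqrt\pi)$, and let $\sigma$ be the non-trivial automorphism of $L/K$. Let $\mathfrak b$ be a nonzero ideal of $\mathcal O_K$ such that $\mathfrak b\mathcal O_L=\beta\mathcal O_L$ for some $\beta\in L$. (1) If $\beta^{\sigma-1}=-1$, then $\pi\mathcal O_K$ is the square of a (fractional) ideal of $K$. (2) If $\beta^{\sigma-1}=\zeta$, where $\zeta$ is a primitive $2^m$th root of unity with $m\ge 2$, then $\pi_m\mathcal O_K$ is the square of a (fractional) ideal of $K$.
   Context: $\mathcal O_F$ denotes the ring of integers of a number field $F$, and $\beta^{\sigma-1}$ means $\sigma(\beta)/\beta$. For $n\ge2$, $\pi_n=2+\zeta_{2^n}+\zeta_{2^n}^{-1}$ with $\zeta_{2^n}=e^{2\pi i/2^n}$. *)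

(* Defs.v *)
From mathcomp Require Import all_boot all_order all_algebra all_field.
Set Implicit Arguments. Unset Strict Implicit. Unset Printing Implicit Defensive.
Import Order.TTheory GRing.Theory Num.Theory.
Local Open Scope ring_scope.

Definition is_numfield (K : algC -> Prop) : Prop :=
  [/\ K 0 /\ K 1,
      (forall x y, K x -> K y -> K (x - y)),
      (forall x y, K x -> K y -> K (x * y)),
      (forall x, K x -> K x^-1) &
      exists s : seq algC, forall x, K x ->
        exists c : seq algC, all (fun q => q \in Crat) c /\
          x = \sum_(i < size s) c`_i * s`_i].

Definition ring_of_integers (F : algC -> Prop) : algC -> Prop :=
  fun x => F x /\ x \in Aint.

Definition quad_ext (F : algC -> Prop) (r : algC) : algC -> Prop :=
  fun x => exists a b, [/\ F a, F b & x = a + b * r].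

(* The graph of the nontrivial automorphism sigma of F(r)/F (r not in F):
   quad_conj F r x y  <->  y = sigma x. *)
Definition quad_conj (F : algC -> Prop) (r : algC) (x y : algC) : Prop :=
  exists a b, [/\ F a, F b, x = a + b * r & y = a - b * r].

Definition seteq (A B : algC -> Prop) : Prop := forall x, A x <-> B x.

Definition ideal_mul (A B : algC -> Prop) : algC -> Prop :=
  fun x => exists s : seq (algC * algC),
    (forall p, p \in s -> A p.1 /\ B p.2) /\ x = \sum_(p <- s) p.1 * p.2.

Definition principal (O : algC -> Prop) (c : algC) : algC -> Prop :=
  fun x => exists y, O y /\ x = c * y.

Definition is_nonzero_ideal (F : algC -> Prop) (I : algC -> Prop) : Prop :=
  [/\ (forall x, I x -> ring_of_integers F x), I 0,
      (forall x y, I x -> I y -> I (x - y)),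
      (forall r x, ring_of_integers F r -> I x -> I (r * x)) &
      exists x, I x /\ x != 0].

Definition is_fractional_ideal (F : algC -> Prop) (A : algC -> Prop) : Prop :=
  [/\ (forall x, A x -> F x) /\ A 0,
      (forall x y, A x -> A y -> A (x - y)),
      (forall r x, ring_of_integers F r -> A x -> A (r * x)),
      (exists x, A x /\ x != 0) &
      exists d, [/\ ring_of_integers F d, d != 0 &
                    forall x, A x -> ring_of_integers F (d * x)]].

(* In algC, (k.-root z) is the k-th root of z
   with nonnegative imaginary part and maximal real part, so
   (2^(n-1)).-root (-1) = e^{i pi / 2^(n-1)} = e^{2 pi i / 2^n}  (n >= 1). *)
Definition zeta2 (n : nat) : algC := (2 ^ n.-1)%N.-root (-1).

Definition pi_n (n : nat) : algC := 2 + zeta2 n + (zeta2 n)^-1.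

(* Main.v *)
Require Import Defs.
From mathcomp Require Import all_boot all_order all_algebra all_field.
From mathcomp Require Import ring.
Import GRing.Theory Num.Theory.
Set Implicit Arguments.
Local Open Scope ring_scope.



Lemma denom_int (p : {poly rat}) :
  exists D : int, 0 < D /\ forall i, (p`_i * D%:~R) \is a Num.int.
Proof.
exists (\prod_(i < size p) denq p`_i); split.
  by apply: prodr_gt0 => i _; apply: denq_gt0.
move=> i; case: (ltnP i (size p)) => Hi; last first.
  by rewrite nth_default // mul0r rpred0.
rewrite (bigD1 (Ordinal Hi)) //= rmorphM /= mulrA -numqE.
by rewrite rpredM ?rpred_int.
Qed.

Lemma Aint_denom (x : algC) : exists n : nat, (0 < n)%N /\ n%:R * x \in Aint.
Proof.
have [p [Dp mon_p] _] := minCpolyP x.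
have [D [D0 HD]] := denom_int p.
pose d := (size p).-1.
pose E i := ratr (p`_i * D%:~R ^+ (d - i)) : algC.
have [n Dn] : exists n : nat, D = n by move: D0; clear; case: D => [n|n] //; exists n.
exists n; split; first by move: D0; rewrite Dn ltz_nat.
have -> : (n%:R : algC) = D%:~R by rewrite Dn.
have sp : size p = d.+1.
  by rewrite /d prednK // lt0n size_poly_eq0 monic_neq0.
apply: (@root_monic_Aint (\poly_(i < size p) E i)).
- rewrite /root horner_poly.
  have : (minCpoly x).[x] == 0 by apply: root_minCpoly.
  rewrite Dp horner_coef size_map_poly => /eqP H.
  apply/eqP; apply: (@eq_trans _ _ (D%:~R ^+ d * \sum_(i < size p) (map_poly ratr p)`_i * x ^+ i)); last by rewrite H mulr0.
  rewrite mulr_sumr; apply: eq_bigr => i _.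
  rewrite /E coef_map /= rmorphM rmorphXn /= ratr_int exprMn mulrA.
  rewrite -[ratr _ * _ * _]mulrA -exprD subnK; last by have := ltn_ord i; rewrite {2}sp ltnS.
  by rewrite mulrCA mulrA.
- have Ed : E d = 1.
    rewrite /E subnn expr0 mulr1.
    by have /monicP := mon_p; rewrite lead_coefE sp /= => ->; rewrite rmorph1.
  have sz : size (\poly_(i < size p) E i) = size p.
    by rewrite size_poly_eq // sp /= Ed oner_neq0.
  by rewrite monicE lead_coefE sz coef_poly sp ltnSn /= Ed.
- apply/polyOverP => i; rewrite coef_poly; case: ifP => Hi; last exact: rpred0.
  rewrite /E; case: (ltnP i d) => Hid.
    rewrite -(subnSK Hid) exprS mulrA.
    have /intrP [k ->] : (p`_i * D%:~R) * D%:~R ^+ (d - i.+1) \is a Num.int.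
      by rewrite rpredM ?rpredX ?rpred_int ?HD.
    by rewrite ratr_int rpred_int.
  have -> : i = d by apply/eqP; rewrite eqn_leq Hid andbT -ltnS -sp.
  rewrite subnn expr0 mulr1.
  by have /monicP := mon_p; rewrite lead_coefE sp /= => ->; rewrite rmorph1 rpred1.
Qed.



Section S.
Variable K : algC -> Prop.
Hypothesis HK : is_numfield K.

Lemma K0 : K 0. Proof. by case: HK => [[]]. Qed.
Lemma K1 : K 1. Proof. by case: HK => [[]]. Qed.
Lemma KB x y : K x -> K y -> K (x - y). Proof. by case: HK => _ H _ _ _; apply: H. Qed.
Lemma KM x y : K x -> K y -> K (x * y). Proof. by case: HK => _ _ H _ _; apply: H. Qed.
Lemma KV x : K x -> K x^-1. Proof. by case: HK => _ _ _ H _; apply: H. Qed.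
Lemma KN x : K x -> K (- x). Proof. by move=> Kx; rewrite -sub0r; apply: KB => //; apply: K0. Qed.
Lemma KD x y : K x -> K y -> K (x + y).
Proof. by move=> Kx Ky; rewrite -[y]opprK; apply: KB => //; apply: KN. Qed.
Lemma Kdiv x y : K x -> K y -> K (x / y). Proof. by move=> Kx Ky; apply: KM => //; apply: KV. Qed.
Lemma KX x n : K x -> K (x ^+ n).
Proof. by move=> Kx; elim: n => [|n IH]; [rewrite expr0; apply: K1 | rewrite exprS; apply: KM]. Qed.
Lemma Knat n : K n%:R.
Proof. by elim: n => [|n IH]; [apply: K0 | rewrite -addn1 natrD; apply: KD => //; apply: K1]. Qed.
Lemma Kint z : K z%:~R.
Proof. by case: z => n; rewrite ?NegzE ?mulrNz; [apply: Knat | apply: KN; apply: Knat]. Qed.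
Lemma Kintnum z : z \in Num.int -> K z.
Proof. by move/intrP => [k ->]; apply: Kint. Qed.
End S.
Arguments KB [K] HK [x y].
Arguments KM [K] HK [x y].
Arguments KD [K] HK [x y].
Arguments Kdiv [K] HK [x y].
Arguments KV [K] HK [x].
Arguments KN [K] HK [x].
Arguments KX [K] HK [x].



Section C.
Variables (K : algC -> Prop) (r : algC).
Hypotheses (HK : is_numfield K) (Hr : ~ K r) (Hr2 : K (r ^+ 2)).
Local Notation C := (quad_conj K r).

Lemma C_K c : K c -> C c c.
Proof. by move=> Kc; exists c, 0; split; rewrite ?mul0r ?addr0 ?subr0 //; apply: K0. Qed.

Lemma C_ext x y : C x y -> quad_ext K r x.
Proof. by case=> a [b] [Ka Kb -> _]; exists a, b. Qed.

Lemma ext_C x : quad_ext K r x -> exists y, C x y.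
Proof. by case=> a [b] [Ka Kb ->]; exists (a - b * r), a, b. Qed.

Lemma C_sym x y : C x y -> C y x.
Proof.
case=> a [b] [Ka Kb -> ->]; exists a, (- b); split=> //; rewrite ?mulNr ?opprK //.
exact: KN.
Qed.

Lemma C_add x x' y y' : C x x' -> C y y' -> C (x + y) (x' + y').
Proof.
case=> a [b] [Ka Kb -> ->]; case=> c [d] [Kc Kd -> ->].
exists (a + c), (b + d); split; [exact: KD | exact: KD | ring | ring].
Qed.

Lemma C_opp x x' : C x x' -> C (- x) (- x').
Proof.
case=> a [b] [Ka Kb -> ->].
exists (- a), (- b); split; [exact: KN | exact: KN | ring | ring].
Qed.

Lemma C_mul x x' y y' : C x x' -> C y y' -> C (x * y) (x' * y').
Proof.
case=> a [b] [Ka Kb -> ->]; case=> c [d] [Kc Kd -> ->].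
exists (a * c + b * d * r ^+ 2), (a * d + b * c); split.
- exact: (KD HK (KM HK Ka Kc) (KM HK (KM HK Kb Kd) Hr2)).
- exact: (KD HK (KM HK Ka Kd) (KM HK Kb Kc)).
- ring.
- ring.
Qed.

Lemma C_uniq x y z : C x y -> C x z -> y = z.
Proof.
case=> a [b] [Ka Kb -> ->]; case=> c [d] [Kc Kd E ->].
have [bd|nbd] := eqVneq b d.
  by move: E; rewrite bd => /addIr ->.
exfalso; apply: Hr.
have -> : r = (c - a) / (b - d).
  apply: (mulIf (_ : b - d != 0)); first by rewrite subr_eq0.
  rewrite divfK ?subr_eq0 //.
  have E' : c = a + b * r - d * r by rewrite E addrK.
  by rewrite E'; ring.
exact: (Kdiv HK (KB HK Kc Ka) (KB HK Kb Kd)).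
Qed.

Lemma C_tr x y : C x y -> K (x + y).
Proof.
case=> a [b] [Ka Kb -> ->].
have -> : a + b * r + (a - b * r) = a + a by ring.
by apply: (KD HK).
Qed.

Lemma C_norm x y : C x y -> K (x * y).
Proof.
case=> a [b] [Ka Kb -> ->].
have -> : (a + b * r) * (a - b * r) = a * a - b * b * r ^+ 2 by ring.
exact: (KB HK (KM HK Ka Ka) (KM HK (KM HK Kb Kb) Hr2)).
Qed.

Lemma C0 y : C 0 y -> y = 0.
Proof. by move=> H; apply: C_uniq H _; apply: C_K; apply: K0. Qed.

Lemma C_exp x y n : C x y -> C (x ^+ n) (y ^+ n).
Proof.
move=> H; elim: n => [|n IH]; first by rewrite !expr0; apply: C_K; apply: K1.
by rewrite !exprS; apply: C_mul.
Qed.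

Lemma C_sum (I : Type) (s : seq I) (P : pred I) (F G : I -> algC) :
  (forall i, P i -> C (F i) (G i)) ->
  C (\sum_(i <- s | P i) F i) (\sum_(i <- s | P i) G i).
Proof.
move=> H; elim: s => [|i s IH]; first by rewrite !big_nil; apply: C_K; apply: K0.
rewrite !big_cons; case: ifP => Pi //; exact: C_add (H _ Pi) IH.
Qed.

Lemma C_Aint x y : C x y -> x \in Aint -> y \in Aint.
Proof.
move=> Cxy Ax.
have Hp : minCpoly x \is a polyOver Num.int by [].
apply: (@root_monic_Aint (minCpoly x)) => //; last exact: minCpoly_monic.
have : C (minCpoly x).[x] (minCpoly x).[y].
  rewrite !horner_coef; apply: C_sum => i _; apply: C_mul; last exact: C_exp.
  by apply: C_K; apply: Kintnum => //; apply: (polyOverP Hp).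
by rewrite (eqP (root_minCpoly x)) => /C0 Hy; rewrite /root Hy.
Qed.

End C.



Section IM.
Variables A B : algC -> Prop.
Lemma IM0 : ideal_mul A B 0.
Proof. by exists [::]; split => //; rewrite big_nil. Qed.
Lemma IMD x y : ideal_mul A B x -> ideal_mul A B y -> ideal_mul A B (x + y).
Proof.
case=> s [Hs ->] [t [Ht ->]]; exists (s ++ t); split; last by rewrite big_cat.
by move=> p; rewrite mem_cat => /orP [] ?; [apply: Hs | apply: Ht].
Qed.
Lemma IMp x y : A x -> B y -> ideal_mul A B (x * y).
Proof.
move=> Ax By; exists [:: (x, y)]; split; last by rewrite big_seq1.
by move=> p; rewrite inE => /eqP ->.
Qed.
Lemma IM_ind (P : algC -> Prop) : P 0 ->
  (forall x y z, A x -> B y -> ideal_mul A B z -> P z -> P (x * y + z)) ->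
  forall z, ideal_mul A B z -> P z.
Proof.
move=> P0 PS z [s [Hs ->]]; elim: s Hs => [|p s IH] Hs; first by rewrite big_nil.
have [Ap Bp] := Hs p (mem_head _ _).
have Hs' : forall q, q \in s -> A q.1 /\ B q.2.
  by move=> q qs; apply: Hs; rewrite inE qs orbT.
rewrite big_cons; apply: PS => //; last exact: IH.
by exists s.
Qed.
End IM.



Section E.
Variables (K : algC -> Prop) (r : algC) (b : algC -> Prop) (beta : algC).
Hypotheses (HK : is_numfield K) (Hr : ~ K r) (Hr2 : K (r ^+ 2)).
Hypothesis Hb : is_nonzero_ideal K b.
Hypothesis Hbeta : quad_ext K r beta.
Local Notation C := (quad_conj K r).
Local Notation OL := (ring_of_integers (quad_ext K r)).
Local Notation OK := (ring_of_integers K).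
Local Notation BL := (ideal_mul b OL).
Hypothesis Hseq : seteq BL (principal OL beta).

Lemma b_OK x : b x -> OK x. Proof. by case: Hb => H _ _ _ _; apply: H. Qed.
Lemma b_K x : b x -> K x. Proof. by case/b_OK. Qed.
Lemma b0 : b 0. Proof. by case: Hb. Qed.
Lemma bB x y : b x -> b y -> b (x - y). Proof. by case: Hb => _ _ H _ _; apply: H. Qed.
Lemma bM c x : OK c -> b x -> b (c * x). Proof. by case: Hb => _ _ _ H _; apply: H. Qed.
Lemma bN x : b x -> b (- x). Proof. by move=> bx; rewrite -sub0r; apply: bB => //; apply: b0. Qed.
Lemma bD x y : b x -> b y -> b (x + y).
Proof. by move=> bx by_; rewrite -[y]opprK; apply: bB => //; apply: bN. Qed.

Lemma ext_add x y : quad_ext K r x -> quad_ext K r y -> quad_ext K r (x + y).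
Proof.
move=> /(ext_C) [x' Hx] /(ext_C) [y' Hy]; exact: (C_ext (C_add HK Hx Hy)).
Qed.
Lemma ext_mul x y : quad_ext K r x -> quad_ext K r y -> quad_ext K r (x * y).
Proof.
move=> /(ext_C) [x' Hx] /(ext_C) [y' Hy]; exact: (C_ext (C_mul HK Hr2 Hx Hy)).
Qed.
Lemma ext_K x : K x -> quad_ext K r x.
Proof. by move=> Kx; exists x, 0; split => //; [apply: K0 | rewrite mul0r addr0]. Qed.

Lemma OL_mul x y : OL x -> OL y -> OL (x * y).
Proof. by case=> Lx Ax [Ly Ay]; split; [apply: ext_mul | apply: rpredM]. Qed.
Lemma OL1 : OL 1. Proof. by split; [apply: ext_K; apply: K1 | apply: rpred1]. Qed.
Lemma OK_OL x : OK x -> OL x. Proof. by case=> Kx Ax; split => //; apply: ext_K. Qed.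

Lemma conj_OL y y' : OL y -> C y y' -> OL y'.
Proof. by case=> Ly Ay Cy; split; [exact: (C_ext (C_sym HK Cy)) | exact: (C_Aint HK Hr Hr2 Cy Ay)]. Qed.

Lemma BL_ext : forall z, BL z -> quad_ext K r z.
Proof.
apply: IM_ind; first by apply: ext_K; apply: K0.
move=> x y z' bx [Ly _] _ IH; apply: ext_add => //; apply: ext_mul => //.
by apply: ext_K; apply: b_K.
Qed.

Lemma BL_conj : forall z, BL z -> forall z', C z z' -> BL z'.
Proof.
apply: (@IM_ind b OL (fun z => forall z', C z z' -> BL z')).
  by move=> z' /(C0 HK Hr) ->; apply: IM0.
move=> x y z bx Oy BLz IH z' Cz'.
have [y' Cy] := ext_C (proj1 Oy).
have [z'' Cz] := ext_C (BL_ext BLz).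
have Cx := C_K r HK _ (b_K bx).
rewrite (C_uniq HK Hr Cz' (C_add HK (C_mul HK Hr2 Cx Cy) Cz)).
apply: IMD; first by apply: IMp => //; apply: conj_OL Oy Cy.
exact: IH.
Qed.

Lemma BL_mulOL z w : BL z -> OL w -> BL (w * z).
Proof.
move=> + Ow; move: z; apply: (@IM_ind b OL (fun z => BL (w * z))).
  by rewrite mulr0; apply: IM0.
move=> x y z bx Oy _ IH.
have -> : w * (x * y + z) = x * (w * y) + w * z by ring.
by apply: IMD => //; apply: IMp => //; apply: OL_mul.
Qed.

Lemma OK_tr y y' : OL y -> C y y' -> OK (y + y').
Proof.
move=> Oy Cy; split; first exact: (C_tr HK Cy).
by apply: rpredD; [case: Oy | case: (conj_OL Oy Cy)].
Qed.

Lemma OK_norm y y' : OL y -> C y y' -> OK (y * y').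
Proof.
move=> Oy Cy; split; first exact: (C_norm HK Hr2 Cy).
by apply: rpredM; [case: Oy | case: (conj_OL Oy Cy)].
Qed.

Lemma BL_tr : forall z, BL z -> forall z', C z z' -> b (z + z').
Proof.
apply: (@IM_ind b OL (fun z => forall z', C z z' -> b (z + z'))).
  by move=> z' /(C0 HK Hr) ->; rewrite addr0; apply: b0.
move=> x y z bx Oy BLz IH z' Cz'.
have [y' Cy] := ext_C (proj1 Oy).
have [z'' Cz] := ext_C (BL_ext BLz).
have Cx := C_K r HK _ (b_K bx).
rewrite (C_uniq HK Hr Cz' (C_add HK (C_mul HK Hr2 Cx Cy) Cz)).
have -> : x * y + z + (x * y' + z'') = (y + y') * x + (z + z'') by ring.
apply: bD; last exact: IH.
by apply: bM => //; apply: OK_tr.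
Qed.

Lemma BL_norm : forall z, BL z -> forall z', C z z' -> ideal_mul b b (z * z').
Proof.
apply: (@IM_ind b OL (fun z => forall z', C z z' -> ideal_mul b b (z * z'))).
  by move=> z' _; rewrite mul0r; apply: IM0.
move=> x y z bx Oy BLz IH z' Cz'.
have [y' Cy] := ext_C (proj1 Oy).
have [z'' Cz] := ext_C (BL_ext BLz).
have Cx := C_K r HK _ (b_K bx).
rewrite (C_uniq HK Hr Cz' (C_add HK (C_mul HK Hr2 Cx Cy) Cz)).
have -> : (x * y + z) * (x * y' + z'') =
   x * ((y * y') * x) + (x * (y * z'' + y' * z) + z * z'') by ring.
apply: IMD; first by apply: IMp => //; apply: bM => //; apply: OK_norm.
apply: IMD; last exact: IH.
apply: IMp => //.
apply: (@BL_tr (y * z'')); first exact: BL_mulOL (BL_conj BLz Cz) Oy.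
exact: (C_mul HK Hr2 Cy (C_sym HK Cz)).
Qed.


Lemma Aint_nat n : (n%:R : algC) \in Aint.
Proof. exact: rpred_nat. Qed.

Lemma G beta' t v c : C beta beta' -> beta != 0 -> beta / beta' \in Aint ->
  K t -> t != 0 -> K v -> v != 0 -> v \in Aint -> v^-1 \in Aint ->
  c = v * t ^+ 2 * (beta * beta') ->
  exists a, is_fractional_ideal K a /\ seteq (principal OK c) (ideal_mul a a).
Proof.
move=> Cb nzb Abb Kt nzt Kv nzv Av Avi ->.
set N := beta * beta'.
have KN : K N by exact: (C_norm HK Hr2 Cb).
have nzb' : beta' != 0.
  apply/eqP => b'0; move: Cb; rewrite b'0 => /(C_sym HK) /(C0 HK Hr) b0'.
  by move: nzb; rewrite b0' eqxx.
have nzN : N != 0 by rewrite mulf_neq0.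
have BLb : BL beta by apply/Hseq; exists 1; split; [exact: OL1 | rewrite mulr1].
have IMN : ideal_mul b b N by exact: (BL_norm BLb Cb).
have bdec y : b y -> exists s, OL s /\ y = beta * s.
  move=> by_; have : BL (y * 1) by apply: IMp => //; apply: OL1.
  by rewrite mulr1 => /Hseq.
have pq y z : b y -> b z -> OK (y * z / N).
  move=> by_ bz; split; first by apply: (Kdiv HK) => //; apply: (KM HK); apply: b_K.
  have [s [[_ As] ->]] := bdec y by_; have [s' [[_ As'] ->]] := bdec z bz.
  have -> : beta * s * (beta * s') / N = s * s' * (beta / beta').
    by rewrite /N; field; rewrite nzb nzb'.
  by apply: rpredM => //; apply: rpredM.
exists (fun x => exists y, b y /\ x = t * y); split.
  split.
  - split; first by move=> x [y [by_ ->]]; apply: (KM HK) => //; apply: b_K.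
    by exists 0; split; [exact: b0 | rewrite mulr0].
  - move=> x y [p [bp ->]] [q [bq ->]]; exists (p - q); split; first exact: bB.
    by rewrite mulrBr.
  - move=> rr x Orr [p [bp ->]]; exists (rr * p); split; first exact: bM.
    by rewrite mulrCA.
  - case: Hb => _ _ _ _ [x0 [bx0 nzx0]]; exists (t * x0); split; first by exists x0.
    by rewrite mulf_neq0.
  - have [n [n0 An]] := Aint_denom t.
    exists n%:R; split.
    + by split; [apply: Knat | apply: Aint_nat].
    + by rewrite pnatr_eq0 -lt0n.
    + move=> x [y [by_ ->]]; split.
        by apply: (KM HK); [apply: Knat | apply: (KM HK) => //; apply: b_K].
      by rewrite mulrA; apply: rpredM => //; case: (b_OK by_).
move=> x; split.
  case=> w [[Kw Aw] ->].
  have OKvw : OK (v * w) by split; [apply: (KM HK) | apply: rpredM].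
  move: IMN.
  apply: (@IM_ind b b (fun z => ideal_mul _ _ (v * t ^+ 2 * z * w))).
    by rewrite mulr0 mul0r; apply: IM0.
  move=> p q z bp bq _ IH.
  have -> : v * t ^+ 2 * (p * q + z) * w = (t * ((v * w) * p)) * (t * q) + v * t ^+ 2 * z * w by ring.
  apply: IMD => //; apply: IMp; [exists (v * w * p); split => //; exact: bM | by exists q].
apply: IM_ind.
  by exists 0; split; [split; [apply: K0 | apply: rpred0] | rewrite mulr0].
move=> x1 y1 z [p [bp ->]] [q [bq ->]] _ [w [[Kw Aw] ->]].
have [Kpq Apq] := pq p q bp bq.
exists (v^-1 * (p * q / N) + w); split.
  split; first by apply: (KD HK) => //; apply: (KM HK) => //; apply: (KV HK).
  by apply: rpredD => //; apply: rpredM.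
by field; rewrite nzN nzv.
Qed.

End E.


Lemma geo (j : nat) (x : algC) : odd j ->
  1 + x ^+ j = (1 + x) * \sum_(i < j) (- x) ^+ i.
Proof.
move=> oj; have := subrX1 (- x) j.
rewrite exprNn -signr_odd oj expr1 => H.
have -> : 1 + x ^+ j = - (-1 * x ^+ j - 1) by ring.
rewrite H; ring.
Qed.

Lemma geo_Aint (j : nat) (x : algC) : odd j -> x \in Aint -> 1 + x != 0 ->
  (1 + x ^+ j) / (1 + x) \in Aint.
Proof.
move=> oj Ax nz; rewrite geo // mulrC mulKf //.
by apply: rpred_sum => i _; apply: rpredX; rewrite rpredN.
Qed.

Lemma cheb (K : algC -> Prop) (z w : algC) : is_numfield K -> z * w = 1 ->
  K (z + w) -> forall n, K (z ^+ n + w ^+ n).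
Proof.
move=> HK zw Ks.
suff H : forall n, K (z ^+ n + w ^+ n) /\ K (z ^+ n.+1 + w ^+ n.+1) by move=> n; case: (H n).
elim=> [|n [IH1 IH2]].
  rewrite !expr0 !expr1; split => //; apply: (KD HK); apply: K1 HK.
split => //.
have -> : z ^+ n.+2 + w ^+ n.+2 = (z + w) * (z ^+ n.+1 + w ^+ n.+1) - (z * w) * (z ^+ n + w ^+ n).
  rewrite !exprS; ring.
by rewrite zw mul1r; apply: (KB HK) => //; apply: (KM HK).
Qed.

Lemma even_sign (h : nat) : ~~ odd h -> (-1) ^+ h = 1 :> algC.
Proof. by move=> eh; rewrite -signr_odd (negbTE eh) expr0. Qed.

Lemma m1_neq1 : (-1 : algC) != 1.
Proof. by rewrite -subr_eq0 -opprD oppr_eq0 (pnatr_eq0 algC 2). Qed.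

Lemma even_h m : (2 <= m)%N -> ~~ odd (2 ^ m.-1)%N.
Proof. by case: m => [|[|m']] // _; rewrite /= expnS oddM. Qed.

Unset Implicit Arguments.

Theorem lemma1 (K : algC -> Prop) (pi sqrtpi : algC)
    (b : algC -> Prop) (beta : algC) :
  is_numfield K ->
  K pi ->
  ~ (exists x, K x /\ x ^+ 2 = pi) ->
  sqrtpi ^+ 2 = pi ->
  is_nonzero_ideal K b ->
  quad_ext K sqrtpi beta ->
  seteq (ideal_mul b (ring_of_integers (quad_ext K sqrtpi)))
        (principal (ring_of_integers (quad_ext K sqrtpi)) beta) ->
  (* (1) *)
  ((forall sbeta, quad_conj K sqrtpi beta sbeta -> sbeta / beta = -1) ->
     exists a, is_fractional_ideal K a /\
       seteq (principal (ring_of_integers K) pi) (ideal_mul a a))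
  /\
  (* (2) *)
  (forall (m : nat) (zeta : algC), (2 <= m)%N ->
     (2 ^ m)%N.-primitive_root zeta ->
     (forall sbeta, quad_conj K sqrtpi beta sbeta -> sbeta / beta = zeta) ->
     exists a, is_fractional_ideal K a /\
       seteq (principal (ring_of_integers K) (pi_n m)) (ideal_mul a a)).
Proof.
move=> HK Kpi nsq r2 Hb Hbeta Hseq.
have Hr : ~ K sqrtpi by move=> Kr; apply: nsq; exists sqrtpi.
have Hr2 : K (sqrtpi ^+ 2) by rewrite r2.
have [beta' Cb] := ext_C Hbeta.
have nzb : beta != 0.
  case: Hb => _ _ _ _ [x0 [bx0 nzx0]].
  have : ideal_mul b (ring_of_integers (quad_ext K sqrtpi)) (x0 * 1).
    by apply: IMp => //; apply: (OL1 sqrtpi HK).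
  rewrite mulr1 => /Hseq [y [_ Ey]]; apply/eqP => b0'.
  by move: nzx0; rewrite Ey b0' mul0r eqxx.
split.
  move=> H1; have Eb' : beta' = - beta.
    by have := H1 _ Cb; move/(canRL (divfK nzb)); rewrite mulN1r.
  case: (Cb) => a0 [b0] [Ka0 Kb0 Eb Eb2].
  have a00 : a0 = 0.
    have : (a0 + a0) = 0 by move: Eb'; rewrite Eb Eb2 => /eqP; rewrite -subr_eq0 => /eqP <-; ring.
    by rewrite -mulr2n -mulr_natr => /eqP; rewrite mulf_eq0 (pnatr_eq0 algC 2) orbF => /eqP.
  have nzb0 : b0 != 0.
    by apply/eqP => b00; move: nzb; rewrite Eb a00 b00 mul0r addr0 eqxx.
  apply: (G HK Hr Hr2 Hb Hseq (b0^-1) (-1) Cb nzb).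
  - by rewrite Eb' invrN mulrN mulfV // rpredN rpred1.
  - exact: (KV HK).
  - by rewrite invr_eq0.
  - exact: (KN HK (K1 HK)).
  - by rewrite oppr_eq0 oner_eq0.
  - by rewrite rpredN rpred1.
  - by rewrite invrN1 rpredN rpred1.
  - rewrite Eb' Eb a00 add0r -r2; field; exact: nzb0.
move=> m zeta m2 prim H2.
set n := (2 ^ m)%N.
set h := (2 ^ m.-1)%N.
have hgt0 : (0 < h)%N by rewrite expn_gt0.
have nh : n = (h * 2)%N by rewrite /n /h -expnSr prednK // (leq_trans _ m2).
have eh : ~~ odd h by rewrite /h; apply: even_h.
have zh : zeta ^+ h != 1.
  rewrite -(prim_order_dvd prim) -/n nh.
  by apply/negP => /(dvdn_leq hgt0); rewrite leqNgt -{1}[h]muln1 ltn_pmul2l.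
set xi := zeta2 m.
have xih : xi ^+ h = -1 by rewrite /xi /zeta2 rootCK.
have xin : xi ^+ n = 1 by rewrite nh exprM xih -signr_odd /= expr0.
have zn : zeta ^+ n = 1 := prim_expr_order prim.
have [[j jlt] /= Exi] := prim_rootP prim xin.
have oj : odd j.
  case: (boolP (odd j)) => // ej; exfalso.
  have E : (j * h = n * j./2)%N.
    by rewrite nh -{1}(odd_double_half j) (negbTE ej) add0n -mul2n mulnC mulnA.
  move: xih; rewrite Exi -exprM E exprM zn expr1n => /eqP; apply/negP.
  by rewrite eq_sym; exact: m1_neq1.
have xiprim : n.-primitive_root xi.
  by rewrite Exi prim_root_exp_coprime // /n coprimeXr // coprimen2.
have [[k klt] /= Ezeta] := prim_rootP xiprim zn.
have ok : odd k.
  case: (boolP (odd k)) => // ek; exfalso.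
  have E : (k * h = n * k./2)%N.
    by rewrite nh -{1}(odd_double_half k) (negbTE ek) add0n -mul2n mulnC mulnA.
  by move: zh; rewrite Ezeta -exprM E exprM xin expr1n eqxx.
have Az : zeta \in Aint := Aint_prim_root prim.
have Axi : xi \in Aint := Aint_prim_root xiprim.
have nzz : zeta != 0 by apply/eqP => z0; move: zn; rewrite z0 expr0n /n expn_eq0 /= => /eqP; rewrite eq_sym oner_eq0.
have nzxi : xi != 0 by apply/eqP => z0; move: xin; rewrite z0 expr0n /n expn_eq0 /= => /eqP; rewrite eq_sym oner_eq0.
have Azi : zeta^-1 \in Aint.
  apply: (Aint_unity_root (expn_gt0 2 m)); rewrite unity_rootE -/n exprVn zn invr1 //.
have Axii : xi^-1 \in Aint.
  apply: (Aint_unity_root (expn_gt0 2 m)); rewrite unity_rootE -/n exprVn xin invr1 //.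
have nz1z : 1 + zeta != 0.
  apply/eqP => /eqP; rewrite addrC addr_eq0 => /eqP ez.
  by move: zh; rewrite ez even_sign // eqxx.
have nz1xi : 1 + xi != 0.
  apply/eqP => /eqP; rewrite addrC addr_eq0 => /eqP ez.
  by move: xih; rewrite ez even_sign // => /eqP; apply/negP; rewrite eq_sym; exact: m1_neq1.
have Eb' : beta' = zeta * beta by have := H2 _ Cb; move/(canRL (divfK nzb)).
have nzb' : beta' != 0 by rewrite Eb' mulf_neq0.
have Kk : K (beta + beta') := C_tr HK Cb.
have KN : K (beta * beta') := C_norm HK Hr2 Cb.
have Ks : K (zeta + zeta^-1).
  have -> : zeta + zeta^-1 = ((beta + beta') ^+ 2 - 2%:R * (beta * beta')) / (beta * beta').
    by rewrite Eb'; field; rewrite ?nzb ?nzb' ?nzxi ?nz1z ?nzz ?nz1xi ?nzk ?nzk'.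
  apply: (Kdiv HK) => //; apply: (KB HK); first exact: (KX HK).
  by apply: (KM HK) => //; apply: Knat.
have Kpi_n : K (pi_n m).
  rewrite /pi_n -/xi -addrA Exi -exprVn; apply: (KD HK); first exact: Knat.
  exact: (@cheb K zeta zeta^-1 HK (mulfV nzz) Ks j).
have nzk : beta + beta' != 0 by rewrite Eb' -{1}[beta]mul1r -mulrDl mulf_neq0 // addrC.
have nzk' : beta + zeta * beta != 0 by rewrite -Eb'.
have Epi : pi_n m = (1 + xi) ^+ 2 / xi by rewrite /pi_n -/xi; field.
have A1 : (1 + xi) / (1 + zeta) \in Aint by rewrite Exi geo_Aint.
have A2 : (1 + zeta) / (1 + xi) \in Aint by rewrite Ezeta geo_Aint.
apply: (G HK Hr Hr2 Hb Hseq ((beta + beta') / (beta * beta'))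
          (pi_n m * (beta * beta') / (beta + beta') ^+ 2) Cb nzb).
- have -> : beta / beta' = zeta^-1 by rewrite Eb'; field; rewrite ?nzb ?nzb' ?nzxi ?nz1z ?nzz ?nz1xi ?nzk ?nzk'.
  exact: Azi.
- exact: (Kdiv HK).
- by rewrite mulf_neq0 // invr_eq0 mulf_neq0.
- by apply: (Kdiv HK); [apply: (KM HK) | apply: (KX HK)].
- by rewrite Epi !mulf_neq0 ?invr_eq0 ?expf_neq0.
- have -> : pi_n m * (beta * beta') / (beta + beta') ^+ 2 =
      ((1 + xi) / (1 + zeta)) ^+ 2 * zeta * xi^-1.
    by rewrite Epi Eb'; field; rewrite ?nzb ?nzb' ?nzxi ?nz1z ?nzz ?nz1xi ?nzk ?nzk'.
  by apply: rpredM => //; apply: rpredM => //; apply: rpredX.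
- have -> : (pi_n m * (beta * beta') / (beta + beta') ^+ 2)^-1 =
      ((1 + zeta) / (1 + xi)) ^+ 2 * xi * zeta^-1.
    by rewrite Epi Eb'; field; rewrite ?nzb ?nzb' ?nzxi ?nz1z ?nzz ?nz1xi ?nzk ?nzk'.
  by apply: rpredM => //; apply: rpredM => //; apply: rpredX.
- by field; rewrite ?nzb ?nzb' ?nzxi ?nz1z ?nzz ?nz1xi ?nzk ?nzk'.
Qed.
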